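(* Let $G$ be a connected graph with a fixed vertex $w$. Take a cycle $C_c$ of length $c \geq 7$, vertex-disjoint from $G$, and identify one vertex of the cycle with $w$; denote the resulting graph by $G^*$. Let $v_1$ be a neighbor of $w$ on the cycle $C_c$. Then $\delta_{G^*}(w) = t_{G^*}(w) - t_{G^*-v_1}(w)\leq -2$.
   Context: All graphs are finite, simple, undirected. For a graph $H$ and vertex $x$, the transmission is $t_H(x)=\sum_{y\in V(H)}\mathrm{dist}_H(x,y)$; $H-v$ denotes $H$ with vertex $v$ and its incident edges deleted. The quantity $\delta_{G^*}(w)$ is taken with respect to the vertex $v_1$, i.e. $\delta_{G^*}(w)=t_{G^*}(w)-t_{G^*-v_1}(w)$. *)

(* Defs.v *)
From HB Require Import structures.
From mathcomp Require Import all_boot all_order all_algebra.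
Unset Strict Implicit. Unset Printing Implicit Defensive.

Definition simple_graph {V : finType} (e : rel V) : Prop :=
  symmetric e /\ irreflexive e.

Definition connected_graph {V : finType} (e : rel V) : Prop :=
  forall x y : V, connect e x y.

Definition walk_len {V : finType} (e : rel V) (n : nat) (x y : V) : bool :=
  [exists p : n.-tuple V, path e x p && (last x p == y)].

(* distance = least length of a walk from x to y; in a connected graph this
   is < #|V|.  (Convention for unreachable pairs: #|V|; irrelevant here since
   all graphs considered are connected.) *)
Definition dist {V : finType} (e : rel V) (x y : V) : nat :=
  find (fun n => walk_len e n x y) (iota 0 #|V|).

Definition transmission {V : finType} (e : rel V) (x : V) : nat :=
  \sum_(y : V) dist e x y.

(* G* : G with a cycle C_c glued at w.  Vertices: inl a for a in G,
   inr i (i : 'I_(c-1)) for the cycle vertex u_{i+1}, where the cycle is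
   w = u_0, u_1, ..., u_{c-1}, u_0. *)
Definition gstar_rel {T : finType} (e : rel T) (w : T) (c : nat)
  : rel (T + 'I_c.-1) :=
  fun x y =>
    match x, y with
    | inl a, inl b => e a b
    | inr i, inr j => ((val i).+1 == val j) || ((val j).+1 == val i)
    | inl a, inr j => (a == w) && ((val j == 0) || (val j == c.-2))
    | inr i, inl b => (b == w) && ((val i == 0) || (val i == c.-2))
    end.

Definition del_rel {V : finType} (e : rel V) (v : V) : rel {x : V | x != v} :=
  fun x y => e (val x) (val y).

Lemma inl_neq_inr {T : finType} {n : nat} (w : T) (i : 'I_n) :
  (inl w : T + 'I_n) != inr i.
Proof. by []. Qed.

(* Main.v *)
Require Import Defs.
From HB Require Import structures.
From mathcomp Require Import all_boot all_order all_algebra.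
From mathcomp Require Import zify.
Import Order.TTheory GRing.Theory Num.Theory.

Lemma walk_lenP {V : finType} (r : rel V) n x y :
  reflect (exists p : seq V, [/\ size p = n, path r x p & last x p = y])
          (walk_len r n x y).
Proof.
apply: (iffP existsP) => [[p /andP[hp /eqP hl]] | [p [hs hp hl]]].
  by exists (val p); rewrite size_tuple.
have hs' : size p == n by apply/eqP.
by exists (Tuple hs'); rewrite /= hp hl eqxx.
Qed.

Lemma dist_le {V : finType} (r : rel V) n x y :
  walk_len r n x y -> n < #|V| -> dist r x y <= n.
Proof.
move=> hw hn; rewrite leqNgt; apply/negP => hlt.
by have := before_find 0 hlt; rewrite nth_iota // add0n hw.
Qed.

Lemma dist_walk {V : finType} (r : rel V) x y :
  dist r x y < #|V| -> walk_len r (dist r x y) x y.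
Proof.
rewrite /dist => h.
have hh : has (fun n => walk_len r n x y) (iota 0 #|V|) by rewrite has_find size_iota.
by have := nth_find 0 hh; rewrite nth_iota ?add0n.
Qed.

Lemma pot_path {V : finType} (r : rel V) (f : V -> nat) :
  (forall a b, r a b -> f b <= f a + 1) ->
  forall p x, path r x p -> f (last x p) <= f x + size p.
Proof.
move=> hf; elim => [|z p IH] x /=; first by rewrite addn0.
move=> /andP[hxz hp]; have := IH z hp; have := hf _ _ hxz; lia.
Qed.

Lemma dist_pot {V : finType} (r : rel V) (f : V -> nat) x y :
  (forall a b, r a b -> f b <= f a + 1) ->
  minn #|V| (f y - f x) <= dist r x y.
Proof.
move=> hf; case: (ltnP (dist r x y) #|V|) => h.
  move/dist_walk/walk_lenP: h => [p [hs hp hl]].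
  have := @pot_path _ _ _ hf _ _ hp; rewrite hl hs; lia.
lia.
Qed.

Lemma card_del {V : finType} (v : V) : #|{: {x : V | x != v}}| = #|V|.-1.
Proof. by rewrite card_sig -(cardC1 v); apply: eq_card. Qed.

Lemma dist_sub {V : finType} (r : rel V) v (s : V) (hs : s != v)
  (y : {x : V | x != v}) :
  (forall x, dist r s x < #|V|) ->
  dist r s (val y) <= dist (del_rel r v) (exist _ s hs) y.
Proof.
move=> reach; have hc := card_del v.
case: (ltnP (dist (del_rel r v) (exist _ s hs) y) #|{: {x : V | x != v}}|) => h.
  have := @dist_walk _ _ _ _ h; move/walk_lenP => [p [hsz hp hl]].
  rewrite -hsz; apply: dist_le.
    apply/walk_lenP; exists (map val p); split.
    - by rewrite size_map.
    - by rewrite (@path_map _ _ val r (exist _ s hs)).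
    - by rewrite (last_map val p (exist _ s hs)) hl.
  have := reach s; lia.
have := reach (val y); lia.
Qed.

Lemma sum_sig {V : finType} (v : V) (F : V -> nat) :
  \sum_(y : {x : V | x != v}) F (val y) = \sum_(x | x != v) F x.
Proof.
rewrite (reindex_omap (val : {x : V | x != v} -> V) insub); last first.
  by move=> i hi; rewrite insubT.
by apply: eq_bigl => -[i iA] /=; rewrite insubT ?iA /= eqxx ?andbT.
Qed.

Lemma combine {V : finType} (r : rel V) v s (hs : s != v) x0 (hx0 : x0 != v) :
  (forall x, dist r s x < #|V|) ->
  dist r s v <= 1 ->
  dist r s x0 + 3 <= dist (del_rel r v) (exist _ s hs) (exist _ x0 hx0) ->
  ((transmission r s)%:Z - (transmission (del_rel r v) (exist _ s hs))%:Z <= - 2)%R.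
Proof.
move=> reach h1 h3.
have e1 : transmission r s = dist r s v + \sum_(y : {x : V | x != v}) dist r s (val y).
  by rewrite /transmission (bigD1 v) //= sum_sig.
have e2 : \sum_(y : {x : V | x != v}) dist r s (val y) + 3 <=
          transmission (del_rel r v) (exist _ s hs).
  rewrite /transmission [X in _ <= X](bigD1 (exist _ x0 hx0)) //= [X in X + 3 <= _](bigD1 (exist _ x0 hx0)) //=.
  have : \sum_(i : {x : V | x != v} | i != exist _ x0 hx0) dist r s (val i) <=
         \sum_(i : {x : V | x != v} | i != exist _ x0 hx0) dist (del_rel r v) (exist _ s hs) i.
    by apply: leq_sum => y _; apply: dist_sub.
  move=> hb; rewrite addnAC; exact: leq_add h3 hb.
move: e2; rewrite e1; lia.
Qed.

Lemma neq_inr (T : finType) n (a b : 'I_n) :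
  (inr a : T + 'I_n) != inr b -> val a != val b.
Proof. by apply: contra => /eqP h; apply/eqP; congr inr; apply: val_inj. Qed.

Theorem lemma2 (T : finType) (e : rel T) (w : T) (c : nat)
  (hG : simple_graph e) (hconn : connected_graph e) (hc : 7 <= c)
  (i : 'I_c.-1) (hv1 : gstar_rel e w c (inl w) (inr i)) :
  ((transmission (gstar_rel e w c) (inl w))%:Z
   - (transmission (del_rel (gstar_rel e w c) (inr i))
        (exist _ (inl w) (inl_neq_inr w i)))%:Z <= - 2)%R.
Proof.
have [c' hc'] : exists c', c = c'.+4.+3 by exists (c - 7); lia.
subst c.
set r := gstar_rel e w c'.+4.+3.
have hV : #|{: T + 'I_(c'.+4.+3).-1}| = #|T| + c'.+4.+2 by rewrite card_sum card_ord.
have hT : 0 < #|T| by apply/card_gt0P; exists w.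
have cyc : forall k (j : 'I_(c'.+4.+3).-1), val j = k -> walk_len r k.+1 (inl w) (inr j).
  elim=> [|k IH] j hj.
    apply/walk_lenP; exists [:: inr j]; split => //=.
    by rewrite /r /gstar_rel eqxx hj.
  have hk : k < c'.+4.+2 by have := ltn_ord j; rewrite hj /=; lia.
  have /walk_lenP [p [hs hp hl]] := IH (Ordinal hk) erefl.
  apply/walk_lenP; exists (rcons p (inr j)); split.
  - by rewrite size_rcons hs.
  - by rewrite rcons_path hp hl /= /r /gstar_rel /= hj eqxx.
  - by rewrite last_rcons.
have reach : forall x, dist r (inl w) x < #|{: T + 'I_(c'.+4.+3).-1}|.
  case=> [a|j].
    have /connectP [p hp ->] := hconn w a.
    case: (shortenP hp) => p' hp' hu _.
    have hsz : size p' < #|T|.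
      move/card_uniqP: hu => /= hu; have := max_card (mem (w :: p')); rewrite hu /=; lia.
    apply: (@leq_ltn_trans (size p')).
      apply: dist_le; last by rewrite hV; lia.
      apply/walk_lenP; exists (map inl p'); split.
      - by rewrite size_map.
      - by rewrite (@path_map _ _ inl r w).
      - by rewrite (last_map inl p' w).
    rewrite hV; lia.
  apply: (@leq_ltn_trans (val j).+1).
    apply: dist_le; first exact: cyc.
    rewrite hV; have := ltn_ord j; move: hT; rewrite /= => a b; clear -a b; lia.
  rewrite hV; have := ltn_ord j; move: hT; rewrite /= => a b; clear -a b; lia.
have hi : val i = 0 \/ val i = c'.+4.+1.
  move: hv1; rewrite /r /gstar_rel eqxx /= => /orP [/eqP -> | /eqP ->]; by [left | right].
have d1 : dist r (inl w) (inr i) <= 1.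
  apply: dist_le; last by rewrite hV; lia.
  by apply/walk_lenP; exists [:: inr i]; split => //; rewrite /= andbT; exact: hv1.
case: hi => hi; have hi' : nat_of_ord i = _ := hi.
- have h1 : 1 < c'.+4.+2 by [].
  pose j1 : 'I_(c'.+4.+3).-1 := Ordinal h1.
  have hx0 : (inr j1 : T + 'I_(c'.+4.+3).-1) != inr i.
    by apply/eqP => -[h]; move: (congr1 val h); rewrite hi.
  apply: (@combine _ r (inr i) (inl w) (inl_neq_inr w i) (inr j1) hx0 reach d1).
  have d2 : dist r (inl w) (inr j1) <= 2.
    by apply: dist_le; [exact: cyc | rewrite hV; lia].
  pose F (x : T + 'I_(c'.+4.+3).-1) := match x with inl _ => 0 | inr j => c'.+4.+2 - val j end.
  have Hf : forall a b, del_rel r (inr i) a b -> F (val b) <= F (val a) + 1.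
  { move=> [a ha] [b hb]; rewrite /del_rel /=.
  case: a ha => [a|ja] ha; case: b hb => [b|jb] hb //=.
  + rewrite /r /gstar_rel => /andP[_ /orP[/eqP h|/eqP h]].
      by have := @neq_inr T _ _ _ hb; rewrite hi => /eqP []; exact: h.
    rewrite h; lia.
  + rewrite /r /gstar_rel => /orP[/eqP h|/eqP h]; have := ltn_ord ja; have := ltn_ord jb; rewrite /=; lia.
  }
  have := @dist_pot _ (del_rel r (inr i)) (fun y => F (val y))
    (exist _ (inl w) (inl_neq_inr w i)) (exist _ (inr j1) hx0) Hf.
  rewrite card_del hV /= => H.
  apply: (leq_trans _ H); apply: (@leq_trans 5); first by rewrite -[5]/(2+3) leq_add2r.
  clear -hT; lia.
- have h1 : c'.+4 < c'.+4.+2 by lia.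
  pose j1 : 'I_(c'.+4.+3).-1 := Ordinal h1.
  have hx0 : (inr j1 : T + 'I_(c'.+4.+3).-1) != inr i.
    by apply/eqP => -[h]; move: (congr1 val h); rewrite hi /=; clear; lia.
  apply: (@combine _ r (inr i) (inl w) (inl_neq_inr w i) (inr j1) hx0 reach d1).
  have d2 : dist r (inl w) (inr j1) <= 2.
    apply: dist_le; last by rewrite hV; lia.
    apply/walk_lenP; exists [:: inr i; inr j1]; split => //=.
    by rewrite eqxx hi' eqxx /= orbT.
  pose F (x : T + 'I_(c'.+4.+3).-1) := match x with inl _ => 0 | inr j => (val j).+1 end.
  have Hf : forall a b, del_rel r (inr i) a b -> F (val b) <= F (val a) + 1.
  { move=> [a ha] [b hb]; rewrite /del_rel /=.
  case: a ha => [a|ja] ha; case: b hb => [b|jb] hb //=.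
  + rewrite /r /gstar_rel => /andP[_ /orP[/eqP h|/eqP h]].
      by rewrite h.
    by have := @neq_inr T _ _ _ hb; rewrite hi => /eqP []; exact: h.
  + rewrite /r /gstar_rel => /orP[/eqP h|/eqP h]; lia.
  }
  have := @dist_pot _ (del_rel r (inr i)) (fun y => F (val y))
    (exist _ (inl w) (inl_neq_inr w i)) (exist _ (inr j1) hx0) Hf.
  rewrite card_del hV /= => H.
  apply: (leq_trans _ H); apply: (@leq_trans 5); first by rewrite -[5]/(2+3) leq_add2r.
  clear -hT; lia.
Qed.
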